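(* Let $\rho^{(2)}_n := 6-4(1+\frac1n)^{3/2}-4(1-\frac1n)^{3/2}+(1+\frac2n)^{3/2}+(1-\frac2n)^{3/2}$ for $n\ge2$. Let $\rho=\{\rho_n\}_{n\ge2}$ be a Rellich weight such that $\rho_n\ge\rho^{(2)}_n$ for all $n\ge2$. Then \[ \sum_{n=2}^{\infty}n^3\left(\rho_n-\rho^{(2)}_n\right)\le 8\sqrt2-3\sqrt3 . \]
   Context: $H_0^2(\mathbb{N}_0):=\{u\in\ell^2(\mathbb{N}_0): u_0=u_1=0\}$. The discrete Dirichlet Laplacian acts by $(-\Delta u)_0=2u_0-u_1$, $(-\Delta u)_n=-u_{n-1}+2u_n-u_{n+1}$ for $n\ge1$. A positive sequence $\{\rho_n\}_{n\ge2}$ is called a Rellich weight if $\sum_{n=1}^\infty|(-\Delta u)_n|^2\ge\sum_{n=2}^\infty\rho_n|u_n|^2$ for all $u\in H_0^2(\mathbb{N}_0)$. *)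

(* Defs.v *)
From Stdlib Require Import Reals Lra.
From Coquelicot Require Import Coquelicot.
Open Scope R_scope.

Definition in_H02 (u : nat -> C) : Prop :=
  u 0%nat = 0%C /\ u 1%nat = 0%C /\ ex_series (fun n => (Cmod (u n))^2).

Definition neg_lap (u : nat -> C) (n : nat) : C :=
  match n with
  | O => (2 * u 0%nat - u 1%nat)%C
  | S m => (- u m + 2 * u n - u (S n))%C
  end.

(* Rellich weight: rho_n > 0 for n >= 2 and
   sum_{n>=1} |(-Δu)_n|^2 >= sum_{n>=2} rho_n |u_n|^2 for all u in H_0^2.
   (The LHS is finite for u in l^2, so the RHS converges.) *)
Definition rellich_weight (rho : nat -> R) : Prop :=
  (forall n, (2 <= n)%nat -> 0 < rho n) /\
  forall u : nat -> C, in_H02 u ->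
    ex_series (fun k => rho (k + 2)%nat * (Cmod (u (k + 2)%nat))^2) /\
    Series (fun k => rho (k + 2)%nat * (Cmod (u (k + 2)%nat))^2)
      <= Series (fun k => (Cmod (neg_lap u (k + 1)%nat))^2).

Definition pow32 (x : R) : R := (sqrt x)^3.

Definition rho2 (n : nat) : R :=
  6 - 4 * pow32 (1 + 1 / INR n) - 4 * pow32 (1 - 1 / INR n)
    + pow32 (1 + 2 / INR n) + pow32 (1 - 2 / INR n).

(* Main.v *)
Require Import Defs.
From Stdlib Require Import Reals Lra Lia Psatz.
From Coquelicot Require Import Coquelicot.
Open Scope R_scope.

Fixpoint ssum (f : nat -> R) (n : nat) : R :=
  match n with O => 0 | S m => ssum f m + f m end.

Lemma ssum_ext f g n : (forall i, (i < n)%nat -> f i = g i) -> ssum f n = ssum g n.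
Proof. induction n; simpl; intros H; auto. rewrite IHn by (intros; apply H; lia). rewrite H by lia. auto. Qed.

Lemma ssum_le f g n : (forall i, (i < n)%nat -> f i <= g i) -> ssum f n <= ssum g n.
Proof. induction n; simpl; intros H; [lra|]. assert (ssum f n <= ssum g n) by (apply IHn; intros; apply H; lia). specialize (H n ltac:(lia)). lra. Qed.

Lemma ssum_nonneg f n : (forall i, (i < n)%nat -> 0 <= f i) -> 0 <= ssum f n.
Proof. intros H. replace 0 with (ssum (fun _ => 0) n). apply ssum_le; auto. induction n; simpl; auto. rewrite IHn; [lra|]. intros; apply H; lia. Qed.

Lemma ssum_zero f n : (forall i, (i < n)%nat -> f i = 0) -> ssum f n = 0.
Proof. induction n; simpl; intros H; auto. rewrite IHn by (intros; apply H; lia). rewrite H by lia. lra. Qed.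

Lemma ssum_plus f g n : ssum (fun i => f i + g i) n = ssum f n + ssum g n.
Proof. induction n; simpl; [lra|]. rewrite IHn. lra. Qed.

Lemma ssum_minus f g n : ssum (fun i => f i - g i) n = ssum f n - ssum g n.
Proof. induction n; simpl; [lra|]. rewrite IHn. lra. Qed.

Lemma ssum_scal c f n : ssum (fun i => c * f i) n = c * ssum f n.
Proof. induction n; simpl; [lra|]. rewrite IHn. lra. Qed.

Lemma ssum_const c n : ssum (fun _ => c) n = INR n * c.
Proof. induction n; simpl ssum; [simpl; lra|]. rewrite IHn, S_INR. lra. Qed.

Lemma ssum_shift f a n : ssum f (a + n) = ssum f a + ssum (fun i => f (a + i)%nat) n.
Proof. induction n; simpl. rewrite Nat.add_0_r; lra. rewrite Nat.add_succ_r; simpl. rewrite IHn. lra. Qed.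

Lemma ssum_tele g n : ssum (fun i => g (S i) - g i) n = g n - g O.
Proof. induction n; simpl; [lra|]. rewrite IHn. lra. Qed.

Lemma ssum_prefix_le f g n N : (n <= N)%nat -> (forall k, (k < n)%nat -> f k = g k) ->
  (forall k, (n <= k)%nat -> (k < N)%nat -> 0 <= g k) -> ssum f n <= ssum g N.
Proof.
  intros HnN Heq Hpos. replace N with (n + (N - n))%nat by lia.
  rewrite ssum_shift. rewrite (ssum_ext f g n Heq).
  assert (0 <= ssum (fun i => g (n + i)%nat) (N - n)); [|lra].
  apply ssum_nonneg; intros; apply Hpos; lia.
Qed.

Lemma sum_n_ssum (f : nat -> R) n : sum_n f n = ssum f (S n).
Proof. induction n. rewrite sum_O; simpl; lra. rewrite sum_Sn, IHn. simpl. unfold plus; simpl. lra. Qed.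

Lemma ssum_stable f N n : (forall k, (N <= k)%nat -> f k = 0) -> (N <= n)%nat -> ssum f n = ssum f N.
Proof. intros H Hn. replace n with (N + (n - N))%nat by lia. rewrite ssum_shift.
  rewrite (ssum_zero (fun i => f (N + i)%nat)); [lra|]. intros; apply H; lia. Qed.

Lemma is_series_ssum f N : (forall k, (N <= k)%nat -> f k = 0) -> is_series f (ssum f N).
Proof.
  intros H. change (is_lim_seq (sum_n f) (ssum f N)).
  apply is_lim_seq_ext_loc with (fun _ => ssum f N); [|apply is_lim_seq_const].
  exists N. intros n Hn. rewrite sum_n_ssum. symmetry; apply ssum_stable; auto.
Qed.

Definition G (k : nat) : R := sqrt (INR k) ^ 3.

Lemma G0 : G 0 = 0.
Proof. unfold G; simpl. rewrite sqrt_0. ring. Qed.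
Lemma G1 : G 1 = 1.
Proof. unfold G; simpl. rewrite sqrt_1. ring. Qed.
Lemma G2 : G 2 = 2 * sqrt 2.
Proof. unfold G. replace (INR 2) with 2 by (simpl; ring).
  replace (sqrt 2 ^ 3) with ((sqrt 2 * sqrt 2) * sqrt 2) by ring. rewrite sqrt_sqrt; lra. Qed.
Lemma G3 : G 3 = 3 * sqrt 3.
Proof. unfold G. replace (INR 3) with 3 by (simpl; ring).
  replace (sqrt 3 ^ 3) with ((sqrt 3 * sqrt 3) * sqrt 3) by ring. rewrite sqrt_sqrt; lra. Qed.
Lemma G_nonneg k : 0 <= G k.
Proof. unfold G. apply pow_le, sqrt_pos. Qed.
Lemma G_sq k : G k ^ 2 = INR k ^ 3.
Proof. unfold G. replace ((sqrt (INR k) ^ 3) ^ 2) with ((sqrt (INR k) * sqrt (INR k)) ^ 3) by ring.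
  rewrite sqrt_sqrt; auto using pos_INR. Qed.

Lemma p32_mul x y z : 0 <= x -> 0 <= y -> x * y = z -> pow32 x * sqrt y ^ 3 = sqrt z ^ 3.
Proof. intros. unfold pow32. subst z. rewrite sqrt_mult by auto. ring. Qed.

Lemma INR_add k j : INR (k + j) = INR k + INR j.
Proof. apply plus_INR. Qed.

Lemma rho2_G m : rho2 (m+2) * G (m+2) =
  G m - 4 * G (m+1) + 6 * G (m+2) - 4 * G (m+3) + G (m+4).
Proof.
  unfold rho2, G. set (x := INR m).
  assert (Hx : 0 <= x) by apply pos_INR.
  replace (INR (m+2)) with (x+2) by (unfold x; rewrite plus_INR; simpl; ring).
  replace (INR (m+1)) with (x+1) by (unfold x; rewrite plus_INR; simpl; ring).
  replace (INR (m+3)) with (x+3) by (unfold x; rewrite plus_INR; simpl; ring).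
  replace (INR (m+4)) with (x+4) by (unfold x; rewrite plus_INR; simpl; ring).
  assert (E1 : pow32 (1 + 1/(x+2)) * sqrt (x+2) ^ 3 = sqrt (x+3) ^ 3).
  { apply p32_mul; try lra. assert (0 < 1/(x+2)) by (apply Rdiv_lt_0_compat; lra). lra. field; lra. }
  assert (E2 : pow32 (1 - 1/(x+2)) * sqrt (x+2) ^ 3 = sqrt (x+1) ^ 3).
  { apply p32_mul; try lra. assert (1/(x+2) <= 1/2) by (apply Rmult_le_reg_r with (x+2); [lra|]; field_simplify; lra); lra. field; lra. }
  assert (E3 : pow32 (1 + 2/(x+2)) * sqrt (x+2) ^ 3 = sqrt (x+4) ^ 3).
  { apply p32_mul; try lra. assert (0 < 2/(x+2)) by (apply Rdiv_lt_0_compat; lra). lra. field; lra. }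
  assert (E4 : pow32 (1 - 2/(x+2)) * sqrt (x+2) ^ 3 = sqrt x ^ 3).
  { apply p32_mul; try lra. assert (1/(x+2) <= 1/2) by (apply Rmult_le_reg_r with (x+2); [lra|]; field_simplify; lra); lra. field; lra. }
  assert (E0 : 6 * sqrt (x+2) ^ 3 = 6 * sqrt (x+2) ^ 3) by auto.
  rewrite <- E1, <- E2, <- E3, <- E4. ring.
Qed.

Lemma tangent a b : 0 <= a -> 0 <= b -> b^3 + 3/2*b*(a^2-b^2) <= a^3.
Proof. intros. assert (0 <= (a-b)^2 * (a + b/2)) by (apply Rmult_le_pos; [apply pow2_ge_0|lra]). nra. Qed.

Lemma local_ineq k p q r :
  let g0 := G k in let g1 := G (k+1) in let g2 := G (k+2) in let g3 := G (k+3) in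
  2*g0*g1*(p-q)^2 + 2*g1*g2*(q-r)^2 - g0*g2*(p-r)^2 <=
  INR (k+2) ^ 3 * (r - 2*q + p)^2 + 3 * INR (k+2) * (r-q)^2
  + 2*g1*(g3-g2)*(r-q)^2 - 2*g0*(g2-g1)*(q-p)^2.
Proof.
  intros g0 g1 g2 g3. unfold g0, g1, g2, g3, G.
  set (x := INR k). assert (Hx : 0 <= x) by apply pos_INR.
  replace (INR (k+2)) with (x+2) by (unfold x; rewrite plus_INR; simpl; ring).
  replace (INR (k+1)) with (x+1) by (unfold x; rewrite plus_INR; simpl; ring).
  replace (INR (k+3)) with (x+3) by (unfold x; rewrite plus_INR; simpl; ring).
  set (s0 := sqrt x). set (s1 := sqrt (x+1)). set (s2 := sqrt (x+2)). set (s3 := sqrt (x+3)).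
  assert (H0 : s0*s0 = x) by (apply sqrt_sqrt; lra).
  assert (H1 : s1*s1 = x+1) by (apply sqrt_sqrt; lra).
  assert (H2 : s2*s2 = x+2) by (apply sqrt_sqrt; lra).
  assert (H3 : s3*s3 = x+3) by (apply sqrt_sqrt; lra).
  assert (P0 : 0 <= s0) by apply sqrt_pos. assert (P1 : 0 <= s1) by apply sqrt_pos.
  assert (P2 : 0 <= s2) by apply sqrt_pos. assert (P3 : 0 <= s3) by apply sqrt_pos.
  set (t := s1*s2). set (u := s0*s2). set (w := s1*s3).
  assert (Ht : t^2 = (x+1)*(x+2)) by (unfold t; replace ((x+1)*(x+2)) with ((s1*s1)*(s2*s2)) by (rewrite H1, H2; ring); ring).
  assert (Hu : u^2 = x*(x+2)) by (unfold u; replace (x*(x+2)) with ((s0*s0)*(s2*s2)) by (rewrite H0, H2; ring); ring).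
  assert (Hw : w^2 = (x+1)*(x+3)) by (unfold w; replace ((x+1)*(x+3)) with ((s1*s1)*(s3*s3)) by (rewrite H1, H3; ring); ring).
  assert (Pt : 0 <= t) by (unfold t; nra). assert (Pu : 0 <= u) by (unfold u; nra).
  assert (Pw : 0 <= w) by (unfold w; nra).
  assert (Tu := tangent u t Pu Pt). assert (Tw := tangent w t Pw Pt).
  assert (Htle : t <= x+2) by nra.
  assert (Kb : 4*t^3 - 2*u^3 - 2*w^3 <= 3*(x+2)) by nra.
  assert (s0 <= s2) by (apply sqrt_le_1_alt; lra).
  assert (Ka : s0^3*s2^3 <= (x+2)^3).
  { replace ((x+2)^3) with (s2^3*s2^3) by (rewrite <- H2; ring).
    apply Rmult_le_compat_r; [apply pow_le; auto|]. apply pow_incr; auto. }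
  assert (Id : 2*s0^3*s1^3*(p-q)^2 + 2*s1^3*s2^3*(q-r)^2 - s0^3*s2^3*(p-r)^2 =
     s0^3*s2^3*(r-2*q+p)^2 + 2*s2^3*(s1^3-s0^3)*(r-q)^2 - 2*s0^3*(s2^3-s1^3)*(q-p)^2) by ring.
  rewrite Id.
  assert (E : 2*s2^3*(s1^3-s0^3) - 2*s1^3*(s3^3-s2^3) = 4*t^3 - 2*u^3 - 2*w^3) by (unfold t, u, w; ring).
  assert (0 <= (r-2*q+p)^2) by apply pow2_ge_0.
  assert (0 <= (r-q)^2) by apply pow2_ge_0.
  nra.
Qed.

Lemma sbp (f c : nat -> R) N :
  ssum (fun k => (f k - 2 * f (k+1)%nat + f (k+2)%nat) * c k) N =
  ssum (fun k => f (k+2)%nat * (c k - 2 * c (k+1)%nat + c (k+2)%nat)) N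
  + (2 * f (N+1)%nat * c N - f N * c N - f (N+1)%nat * c (N+1)%nat)
  - (2 * f 1%nat * c 0%nat - f 0%nat * c 0%nat - f 1%nat * c 1%nat).
Proof.
  induction N; simpl ssum. simpl; ring.
  rewrite IHN. replace (S N + 1)%nat with (N+2)%nat by lia.
  replace (S N) with (N+1)%nat by lia. replace (N + 1 + 1)%nat with (N+2)%nat by lia. ring.
Qed.

Definition wv (v : nat -> R) k := G k * v k.
Definition Tp (v : nat -> R) k :=
  2 * G k * G (k+1) * (v k - v (k+1)%nat)^2 + 2 * G (k+1) * G (k+2) * (v (k+1)%nat - v (k+2)%nat)^2
  - G k * G (k+2) * (v k - v (k+2)%nat)^2.

Lemma Q_identity v N : v 1%nat = 0 -> (forall k, (N <= k)%nat -> v k = 0) ->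
  ssum (fun k => (wv v k - 2 * wv v (k+1)%nat + wv v (k+2)%nat)^2) N =
  ssum (Tp v) N + ssum (fun k => rho2 (k+2) * wv v (k+2)%nat ^ 2) N.
Proof.
  intros Hv1 HvN.
  set (f := fun k => G k * v k ^ 2).
  set (c := fun k => G k - 2 * G (k+1)%nat + G (k+2)%nat).
  rewrite (ssum_ext _ (fun k => Tp v k + (f k - 2 * f (k+1)%nat + f (k+2)%nat) * c k)).
  2:{ intros i _. unfold Tp, wv, f, c. ring. }
  rewrite ssum_plus, sbp. f_equal.
  assert (f0 : f 0%nat = 0) by (unfold f; rewrite G0; ring).
  assert (f1 : f 1%nat = 0) by (unfold f; rewrite Hv1; ring).
  assert (fN : f N = 0) by (unfold f; rewrite HvN by lia; ring).
  assert (fN1 : f (N+1)%nat = 0) by (unfold f; rewrite HvN by lia; ring).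
  rewrite f0, f1, fN, fN1.
  rewrite (ssum_ext _ (fun k => rho2 (k+2) * wv v (k+2)%nat ^ 2)). ring.
  intros i _. unfold f, c, wv.
  replace (i+2+1)%nat with (i+3)%nat by lia. replace (i+2+2)%nat with (i+4)%nat by lia.
  replace (i+1+1)%nat with (i+2)%nat by lia. replace (i+1+2)%nat with (i+3)%nat by lia.
  transitivity (G (i+2)%nat * v (i+2)%nat ^ 2 * (rho2 (i+2) * G (i+2)%nat)). 2: ring.
  f_equal. rewrite rho2_G. ring.
Qed.

Lemma fb_mid x k : 1 <= x -> x + 1 <= k ->
  (x+1)^3 * ((1/(x+1) - (x+1)/k^2) - (1/x - x/k^2))^2 + 3*(x+1)*(1/(x+1) - (x+1)/k^2)^2
  <= 11/(x+1) + 2/k.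
Proof.
  intros Hx Hk.
  set (A := 1/(x*(x+1))). set (B := 1/k^2).
  assert (Hd : (1/(x+1) - (x+1)/k^2) - (1/x - x/k^2) = -(A+B)) by (unfold A, B; field; lra).
  rewrite Hd.
  assert (Hsq : (-(A+B))^2 <= 2*A^2 + 2*B^2) by (assert (0 <= (A-B)^2) by apply pow2_ge_0; replace (2*A^2+2*B^2) with ((-(A+B))^2 + (A-B)^2) by ring; lra).
  assert (HA : (x+1)^3 * A^2 <= 4/(x+1)).
  { unfold A. replace ((x+1)^3 * (1/(x*(x+1)))^2) with ((x+1)/x^2) by (field; lra).
    apply Rmult_le_reg_r with (x^2*(x+1)); [nra|].
    replace ((x+1)/x^2 * (x^2*(x+1))) with ((x+1)^2) by (field; lra).
    replace (4/(x+1) * (x^2*(x+1))) with (4*x^2) by (field; lra). nra. }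
  assert (HB : (x+1)^3 * B^2 <= 1/k).
  { unfold B. replace ((x+1)^3 * (1/k^2)^2) with ((x+1)^3/k^4) by (field; lra).
    apply Rmult_le_reg_r with (k^4); [apply pow_lt; lra|].
    replace ((x+1)^3/k^4 * k^4) with ((x+1)^3) by (field; lra).
    replace (1/k * k^4) with (k^3) by (field; lra). apply pow_incr; lra. }
  set (b := 1/(x+1) - (x+1)/k^2).
  assert (Hb1 : (x+1)/k^2 <= 1/(x+1)).
  { apply Rmult_le_reg_r with (k^2*(x+1)); [nra|].
    replace ((x+1)/k^2 * (k^2*(x+1))) with ((x+1)^2) by (field; lra).
    replace (1/(x+1) * (k^2*(x+1))) with (k^2) by (field; lra). nra. }
  assert (Hb0 : 0 <= b) by (unfold b; lra).
  assert (Hb2 : b <= 1/(x+1)).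
  { unfold b. assert (0 <= (x+1)/k^2) by (apply Rdiv_le_0_compat; nra). lra. }
  assert (Hb3 : 3*(x+1)*b^2 <= 3/(x+1)).
  { assert ((x+1)*b <= 1).
    { assert ((x+1)*b <= (x+1)*(1/(x+1))) by (apply Rmult_le_compat_l; lra).
      assert ((x+1)*(1/(x+1)) = 1) by (field; lra). lra. }
    assert ((x+1)*b^2 <= b) by nra.
    unfold Rdiv. nra. }
  assert (E : (x+1)^3 * (-(A+B))^2 <= 2*((x+1)^3*A^2) + 2*((x+1)^3*B^2)).
  { assert (0 <= (x+1)^3) by (apply pow_le; lra). nra. }
  assert (4/(x+1) = 4*(1/(x+1))) by (field; lra).
  assert (11/(x+1) = 11*(1/(x+1))) by (field; lra).
  assert (3/(x+1) = 3*(1/(x+1))) by (field; lra).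
  assert (2/k = 2*(1/k)) by (field; lra).
  lra.
Qed.

Definition bb (M K : nat) (j : nat) : R :=
  if andb (Nat.leb M j) (Nat.ltb j K) then 1/INR (j+1) - INR (j+1)/INR K^2 else 0.

Lemma bb_out M K j : (j < M \/ K <= j)%nat -> bb M K j = 0.
Proof.
  unfold bb. intros H. destruct (M <=? j)%nat eqn:E1; destruct (j <? K)%nat eqn:E2; simpl; auto.
  apply Nat.leb_le in E1. apply Nat.ltb_lt in E2. lia.
Qed.

Lemma bb_in M K j : (M <= j < K)%nat -> bb M K j = 1/INR (j+1) - INR (j+1)/INR K^2.
Proof.
  unfold bb. intros H. destruct (M <=? j)%nat eqn:E1; destruct (j <? K)%nat eqn:E2; simpl; auto.
  all: try apply Nat.leb_gt in E1; try apply Nat.ltb_ge in E2; lia.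
Qed.

Lemma win_bounds y k : 0 < y -> y <= k -> 0 <= 1/y - y/k^2 <= 1/y.
Proof.
  intros Hy Hk.
  assert (y/k^2 <= 1/y).
  { apply Rmult_le_reg_r with (k^2*y); [apply Rmult_lt_0_compat; [apply pow_lt|]; lra|].
    replace (y/k^2 * (k^2*y)) with (y^2) by (field; lra).
    replace (1/y * (k^2*y)) with (k^2) by (field; lra). apply pow_incr; lra. }
  assert (0 <= y/k^2) by (apply Rdiv_le_0_compat; [lra|apply pow_lt; lra]). lra.
Qed.

Lemma bb_bounds M K j : 0 <= bb M K j <= 1/INR (j+1).
Proof.
  assert (0 < INR (j+1)) by (apply lt_0_INR; lia).
  assert (0 <= 1/INR (j+1)) by (apply Rlt_le, Rdiv_lt_0_compat; lra).
  destruct (Nat.le_gt_cases M j); destruct (Nat.lt_ge_cases j K).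
  - rewrite bb_in by lia. apply win_bounds; auto. apply le_INR; lia.
  - rewrite bb_out by lia. lra.
  - rewrite bb_out by lia. lra.
  - rewrite bb_out by lia. lra.
Qed.

Lemma bb_last M K : (M < K)%nat -> bb M K (K-1) = 0.
Proof.
  intros H. rewrite bb_in by lia. replace (K-1+1)%nat with K by lia.
  assert (0 < INR K) by (apply lt_0_INR; lia). field; lra.
Qed.

Definition SS M K := ssum (bb M K) K.
Definition HH M P := ssum (fun i => 1/INR (M+i+1)) P.

Lemma SS_ge M K : (M < K)%nat -> HH M (K-M) - 1 <= SS M K.
Proof.
  intros H. unfold SS.
  replace (ssum (bb M K) K) with (ssum (bb M K) (M + (K-M))) by (f_equal; lia).
  rewrite ssum_shift. rewrite (ssum_zero (bb M K) M) by (intros; apply bb_out; lia).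
  assert (HK : 0 < INR K) by (apply lt_0_INR; lia).
  assert (ssum (fun i => 1/INR (M+i+1) - 1/INR K) (K-M) <= ssum (fun i => bb M K (M+i)%nat) (K-M)).
  { apply ssum_le. intros i Hi. rewrite bb_in by lia.
    assert (INR (M+i+1) <= INR K) by (apply le_INR; lia).
    assert (0 < INR (M+i+1)) by (apply lt_0_INR; lia).
    assert (INR (M+i+1)/INR K^2 <= 1/INR K).
    { apply Rmult_le_reg_r with (INR K^2); [apply pow_lt; lra|].
      replace (INR (M+i+1)/INR K^2 * INR K^2) with (INR (M+i+1)) by (field; lra).
      replace (1/INR K * INR K^2) with (INR K) by (field; lra). lra. }
    lra. }
  rewrite ssum_minus, ssum_const in H0. unfold HH.
  assert (INR (K-M) * (1/INR K) <= 1).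
  { assert (INR (K-M) <= INR K) by (apply le_INR; lia).
    replace 1 with (INR K * (1/INR K)) at 2 by (field; lra).
    apply Rmult_le_compat_r; auto. apply Rlt_le, Rdiv_lt_0_compat; lra. }
  lra.
Qed.

Definition vv M K j := if (j <=? 1)%nat then 0 else 1 - ssum (bb M K) j / SS M K.

Lemma vv_1 M K : vv M K 1 = 0.
Proof. reflexivity. Qed.

Lemma vv_one M K j : (2 <= j <= M)%nat -> vv M K j = 1.
Proof.
  intros H. unfold vv. destruct (j <=? 1)%nat eqn:E. apply Nat.leb_le in E; lia.
  rewrite ssum_zero. unfold Rdiv; ring. intros; apply bb_out; lia.
Qed.

Lemma vv_zero M K j : (K <= j)%nat -> (2 <= K)%nat -> SS M K <> 0 -> vv M K j = 0.
Proof.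
  intros H H2 HS. unfold vv. destruct (j <=? 1)%nat eqn:E. auto.
  rewrite (ssum_stable _ K) by (auto; intros; apply bb_out; lia). fold (SS M K). field; auto.
Qed.

Lemma vv_diff M K j : (2 <= j)%nat -> SS M K <> 0 -> vv M K (j+1) - vv M K j = - bb M K j / SS M K.
Proof.
  intros H HS. unfold vv. destruct (j <=? 1)%nat eqn:E. apply Nat.leb_le in E; lia.
  destruct (j+1 <=? 1)%nat eqn:E'. apply Nat.leb_le in E'; lia.
  replace (j+1)%nat with (S j) by lia. simpl ssum. field; auto.
Qed.

Definition Fb M K k := INR (k+2)^3 * (bb M K (k+1) - bb M K k)^2 + 3 * INR (k+2) * bb M K (k+1)^2.

Lemma Fb_nonneg M K k : 0 <= Fb M K k.
Proof.
  unfold Fb. assert (0 <= INR (k+2)) by apply pos_INR.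
  apply Rplus_le_le_0_compat. apply Rmult_le_pos; [apply pow_le; lra| apply pow2_ge_0].
  apply Rmult_le_pos; [lra| apply pow2_ge_0].
Qed.

Lemma Fb_sum M K : (3 <= M < K)%nat -> ssum (Fb M K) K <= INR M + 6 + 11 * HH M (K-M).
Proof.
  intros [HM HK].
  replace K with ((M-1) + (1 + (K-M)))%nat at 2 by lia.
  rewrite !ssum_shift.
  rewrite (ssum_zero (Fb M K) (M-1)).
  2:{ intros i Hi. unfold Fb. rewrite !bb_out by lia. ring. }
  assert (HKpos : 0 < INR K) by (apply lt_0_INR; lia).
  assert (H1 : ssum (fun i => Fb M K (M-1+i)%nat) 1 <= INR M + 4).
  { simpl ssum. rewrite Nat.add_0_r. unfold Fb.
    replace (M-1+1)%nat with M by lia. replace (M-1+2)%nat with (M+1)%nat by lia.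
    rewrite (bb_out M K (M-1)) by lia.
    set (y := INR (M+1)). assert (Hy : INR (M+1) = INR M + 1) by (rewrite plus_INR; simpl; ring).
    assert (Hy1 : 1 <= y) by (unfold y; rewrite Hy; assert (0 <= INR M) by apply pos_INR; lra).
    destruct (bb_bounds M K M) as [Hb0 Hb1]. set (b := bb M K M) in *.
    replace (M+1)%nat with (M+1)%nat in Hb1 by lia. fold y in Hb1.
    assert (Hyb : y*b <= 1).
    { assert (y*b <= y*(1/y)) by (apply Rmult_le_compat_l; lra).
      assert (y*(1/y) = 1) by (field; lra). lra. }
    assert (Hyv : y = INR M + 1) by (unfold y; exact Hy). clearbody y b. assert (0 <= y*b) by (apply Rmult_le_pos; lra).
    assert (y^3*(b-0)^2 = y * (y*b)^2) by ring.
    assert ((y*b)^2 <= 1) by nra.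
    assert (y*(y*b)^2 <= y*1) by (apply Rmult_le_compat_l; lra).
    assert (3*y*b^2 = 3*b*(y*b)) by ring.
    assert (b <= 1) by (assert (1/y <= 1) by (apply Rmult_le_reg_r with y; [lra|]; field_simplify; lra); lra).
    assert (3*b*(y*b) <= 3) by nra.
    lra. }
  assert (H2 : ssum (fun i => Fb M K (M-1+(1+i))%nat) (K-M) <=
               ssum (fun i => 11 * (1/INR (M+i+1)) + 2 * (1/INR K)) (K-M)).
  { apply ssum_le. intros i Hi. replace (M-1+(1+i))%nat with (M+i)%nat by lia.
    assert (Hx0 : 0 < INR (M+i+1)) by (apply lt_0_INR; lia).
    assert (0 < 1/INR (M+i+1)) by (apply Rdiv_lt_0_compat; lra).
    assert (0 < 1/INR K) by (apply Rdiv_lt_0_compat; lra).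
    destruct (Nat.lt_ge_cases (M+i+1) K).
    - unfold Fb. rewrite !bb_in by lia.
      assert (Ex2 : INR (M+i+2) = INR (M+i+1) + 1) by (rewrite !plus_INR; simpl; ring).
      assert (Ex3 : INR (M+i+1+1) = INR (M+i+1) + 1) by (rewrite !plus_INR; simpl; ring).
      assert (HxK : INR (M+i+1) + 1 <= INR K) by (rewrite <- Ex2; apply le_INR; lia).
      assert (Hx1 : 1 <= INR (M+i+1)) by (replace 1 with (INR 1) by auto; apply le_INR; lia).
      rewrite Ex2, Ex3.
      set (x := INR (M+i+1)) in *. clearbody x.
      pose proof (fb_mid x (INR K) Hx1 HxK) as Hm.
      assert (1/(x+1) <= 1/x) by (apply Rmult_le_reg_r with (x*(x+1)); [nra|]; field_simplify; lra).
      replace (11/(x+1)) with (11*(1/(x+1))) in Hm by (field; lra).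
      replace (2/INR K) with (2*(1/INR K)) in Hm by (field; lra).
      lra.
    - unfold Fb. rewrite (bb_out M K (M+i+1)) by lia.
      assert (bb M K (M+i) = 0) by (replace (M+i)%nat with (K-1)%nat by lia; apply bb_last; lia). rewrite H3. match goal with |- ?a <= _ => replace a with 0 by ring end; lra. }
  rewrite ssum_plus, !ssum_scal, ssum_const in H2. fold (HH M (K-M)) in H2.
  assert (INR (K-M) * (2 * (1/INR K)) <= 2).
  { assert (INR (K-M) <= INR K) by (apply le_INR; lia).
    replace (INR (K-M) * (2 * (1/INR K))) with (2 * (INR (K-M) / INR K)) by (field; lra).
    assert (INR (K-M) / INR K <= 1) by (apply Rmult_le_reg_r with (INR K); [lra|]; field_simplify; lra).
    lra. }
  lra.
Qed.

Lemma Tp_sum M K : (3 <= M < K)%nat -> 0 < SS M K ->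
  ssum (Tp (vv M K)) K <= 8 * sqrt 2 - 3 * sqrt 3 + ssum (Fb M K) K / SS M K ^ 2.
Proof.
  intros [HM HK] HS. set (v := vv M K). set (Sv := SS M K).
  assert (HS0 : Sv <> 0) by (unfold Sv; lra).
  replace K with (2 + (K-2))%nat at 1 by lia. rewrite ssum_shift.
  assert (v1 : v 1%nat = 0) by apply vv_1.
  assert (v2 : v 2%nat = 1) by (apply vv_one; lia).
  assert (v3 : v 3%nat = 1) by (apply vv_one; lia).
  assert (Hfirst : ssum (Tp v) 2 = 8 * sqrt 2 - 3 * sqrt 3).
  { simpl ssum. unfold Tp. simpl Nat.add. rewrite v1, v2, v3, G0, G1, G2, G3. ring. }
  rewrite Hfirst.
  set (Phi := fun k => 2 * G k * (G (k+2)%nat - G (k+1)%nat) * (v (k+1)%nat - v k)^2).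
  assert (Hloc : forall i, (i < K-2)%nat ->
     Tp v (2+i)%nat <= Fb M K (2+i)%nat / Sv^2 + (Phi (2 + S i)%nat - Phi (2+i)%nat)).
  { intros i Hi. set (k := (2+i)%nat).
    pose proof (local_ineq k (v k) (v (k+1)%nat) (v (k+2)%nat)) as L. cbv zeta in L.
    assert (d0 : v (k+1)%nat - v k = - bb M K k / Sv) by (apply vv_diff; [unfold k; lia | exact HS0]).
    assert (d1 : v (k+2)%nat - v (k+1)%nat = - bb M K (k+1) / Sv).
    { replace (k+2)%nat with (k+1+1)%nat by lia. apply vv_diff; [unfold k; lia | exact HS0]. }
    replace (2 + S i)%nat with (k+1)%nat by (unfold k; lia).
    unfold Phi. replace (k+1+2)%nat with (k+3)%nat by lia. replace (k+1+1)%nat with (k+2)%nat by lia.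
    unfold Tp, Fb.
    replace (v (k+2)%nat - 2 * v (k+1)%nat + v k) with ((v (k+2)%nat - v (k+1)%nat) - (v (k+1)%nat - v k)) in L by ring.
    replace (v (k+1)%nat - v (k+2)%nat) with (-(v (k+2)%nat - v (k+1)%nat)) in L by ring.
    replace (v (k+1)%nat - v (k+2)%nat) with (-(v (k+2)%nat - v (k+1)%nat)) by ring.
    rewrite d0, d1 in L. rewrite d1, d0.
    replace (INR (k+2)^3 * (- bb M K (k+1) / Sv - - bb M K k / Sv)^2 + 3 * INR (k+2) * (- bb M K (k+1) / Sv)^2)
      with ((INR (k+2)^3 * (bb M K (k+1) - bb M K k)^2 + 3 * INR (k+2) * bb M K (k+1)^2) / Sv^2) in L
      by (field; auto).
    lra. }
  assert (Hs := ssum_le _ _ (K-2) Hloc).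
  rewrite ssum_plus in Hs.
  rewrite (ssum_tele (fun i => Phi (2+i)%nat)) in Hs.
  assert (P2 : Phi (2+0)%nat = 0) by (unfold Phi; simpl Nat.add; rewrite v2, v3; ring).
  assert (PK : Phi (2+(K-2))%nat = 0).
  { unfold Phi, v. replace (2+(K-2))%nat with K by lia.
    rewrite (vv_zero M K K), (vv_zero M K (K+1)); try lia; auto. ring. }
  rewrite P2, PK in Hs.
  assert (ssum (fun i => Fb M K (2+i)%nat / Sv^2) (K-2) <= ssum (Fb M K) K / Sv^2).
  { assert (E1: ssum (fun i => Fb M K (2+i)%nat / Sv^2) (K-2) = / Sv^2 * ssum (fun i => Fb M K (2+i)%nat) (K-2))
      by (rewrite <- ssum_scal; apply ssum_ext; intros; unfold Rdiv; ring).
    assert (E2: ssum (Fb M K) K = ssum (Fb M K) 2 + ssum (fun i => Fb M K (2+i)%nat) (K-2))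
      by (rewrite <- ssum_shift; f_equal; lia).
    rewrite E1, E2. unfold Rdiv.
    assert (0 <= ssum (Fb M K) 2) by (apply ssum_nonneg; intros; apply Fb_nonneg).
    assert (0 < / Sv^2) by (apply Rinv_0_lt_compat, pow_lt; auto).
    nra. }
  lra.
Qed.

Lemma Cmod_RtoC_sq x : Cmod (RtoC x) ^ 2 = x ^ 2.
Proof. rewrite Cmod_R. apply pow2_abs. Qed.

Lemma neg_lap_R (w : nat -> R) k :
  neg_lap (fun n => RtoC (w n)) (k+1)%nat = RtoC (- w k + 2 * w (k+1)%nat - w (k+2)%nat).
Proof.
  replace (k+1)%nat with (S k) by lia. replace (k+2)%nat with (S (S k)) by lia.
  simpl neg_lap. apply injective_projections; simpl; ring.
Qed.

Lemma rellich_finite rho (w : nat -> R) N : rellich_weight rho ->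
  w 0%nat = 0 -> w 1%nat = 0 -> (forall k, (N <= k)%nat -> w k = 0) ->
  ssum (fun k => rho (k+2)%nat * w (k+2)%nat ^ 2) N <=
  ssum (fun k => (w k - 2 * w (k+1)%nat + w (k+2)%nat) ^ 2) N.
Proof.
  intros [_ Hrel] H0 H1 HN.
  set (u := fun n => RtoC (w n)).
  assert (Hu : in_H02 u).
  { split; [|split].
    - unfold u; rewrite H0; reflexivity.
    - unfold u; rewrite H1; reflexivity.
    - exists (ssum (fun n => Cmod (u n) ^ 2) N). apply is_series_ssum.
      intros k Hk. unfold u. rewrite Cmod_RtoC_sq, HN by auto. ring. }
  destruct (Hrel u Hu) as [_ Hle].
  assert (E1 : Series (fun k => rho (k + 2)%nat * Cmod (u (k + 2)%nat) ^ 2) =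
     ssum (fun k => rho (k+2)%nat * w (k+2)%nat ^ 2) N).
  { rewrite (is_series_unique _ (ssum (fun k => rho (k + 2)%nat * Cmod (u (k + 2)%nat) ^ 2) N)).
    - apply ssum_ext. intros; unfold u; rewrite Cmod_RtoC_sq; auto.
    - apply is_series_ssum. intros k Hk. unfold u. rewrite Cmod_RtoC_sq, HN by lia. ring. }
  assert (E2 : Series (fun k => Cmod (neg_lap u (k + 1)) ^ 2) =
     ssum (fun k => (w k - 2 * w (k+1)%nat + w (k+2)%nat) ^ 2) N).
  { rewrite (is_series_unique _ (ssum (fun k => Cmod (neg_lap u (k + 1)) ^ 2) N)).
    - apply ssum_ext. intros; unfold u; rewrite neg_lap_R, Cmod_RtoC_sq; ring.
    - apply is_series_ssum. intros k Hk. unfold u. rewrite neg_lap_R, Cmod_RtoC_sq, !HN by lia. ring. }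
  lra.
Qed.

Definition hs n := ssum (fun i => 1 / INR (i+1)) n.

Lemma hs_double n : (1 <= n)%nat -> hs n + 1/2 <= hs (n + n).
Proof.
  intros Hn. unfold hs. rewrite ssum_shift.
  assert (Hp : 0 < INR n) by (apply lt_0_INR; lia).
  assert (ssum (fun _ => 1 / (2 * INR n)) n <= ssum (fun i => 1 / INR (n + i + 1)) n).
  { apply ssum_le. intros i Hi.
    assert (0 < INR (n+i+1)) by (apply lt_0_INR; lia).
    assert (INR (n+i+1) <= 2 * INR n) by (replace (2 * INR n) with (INR (n+n)) by (rewrite plus_INR; ring); apply le_INR; lia).
    apply Rmult_le_reg_r with (2 * INR n * INR (n+i+1)). nra.
    field_simplify; lra. }
  rewrite ssum_const in H. replace (INR n * (1 / (2 * INR n))) with (1/2) in H by (field; lra). lra.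
Qed.

Lemma hs_pow M j : (1 <= M)%nat -> hs M + INR j / 2 <= hs (2^j * M).
Proof.
  intros HM. induction j.
  - simpl. rewrite Nat.add_0_r. lra.
  - replace (2 ^ S j * M)%nat with (2^j * M + 2^j * M)%nat by (simpl; lia).
    assert (1 <= 2^j * M)%nat by (assert (1 <= 2^j)%nat by (apply Nat.neq_0_lt_0, Nat.pow_nonzero; lia); nia).
    pose proof (hs_double _ H). rewrite S_INR. lra.
Qed.

Lemma HH_unbounded M B : (1 <= M)%nat -> exists K, (M < K)%nat /\ B <= HH M (K - M).
Proof.
  intros HM. destruct (INR_archimed 1 (2*B)) as [j Hj]; [lra|].
  exists (2^(S j) * M)%nat. split.
  - assert (1 <= 2^j)%nat by (apply Nat.neq_0_lt_0, Nat.pow_nonzero; lia). simpl. nia.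
  - assert (HH M (2^(S j) * M - M) = hs (2^(S j) * M) - hs M).
    { unfold HH, hs. replace (2^(S j) * M)%nat with (M + (2^(S j)*M - M))%nat at 2.
      rewrite ssum_shift. ring.
      assert (1 <= 2^j)%nat by (apply Nat.neq_0_lt_0, Nat.pow_nonzero; lia). simpl. nia. }
    rewrite H. pose proof (hs_pow M (S j) HM). rewrite S_INR in H0. lra.
Qed.

Definition tseq (rho : nat -> R) k := INR (k+2) ^ 3 * (rho (k+2)%nat - rho2 (k+2)%nat).

Lemma partial_eps rho : rellich_weight rho -> (forall n, (2 <= n)%nat -> rho2 n <= rho n) ->
  forall n eps, 0 < eps -> ssum (tseq rho) n <= 8 * sqrt 2 - 3 * sqrt 3 + eps.
Proof.
  intros Hrel Hge n eps Heps.
  set (M := (n+3)%nat).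
  destruct (HH_unbounded M (Rmax 2 (4 * (INR M + 17) / eps))) as [K [HMK HH2]]; [unfold M; lia|].
  set (H := HH M (K-M)) in *.
  assert (HHa : 2 <= H) by (eapply Rle_trans; [apply Rmax_l| exact HH2]).
  assert (HHb : 4 * (INR M + 17) / eps <= H) by (eapply Rle_trans; [apply Rmax_r| exact HH2]).
  assert (HS1 : H - 1 <= SS M K) by (apply SS_ge; auto).
  assert (HSpos : 0 < SS M K) by lra.
  assert (HSne : SS M K <> 0) by lra.
  set (v := vv M K). set (w := wv v).
  assert (Hv1 : v 1%nat = 0) by apply vv_1.
  assert (HvK : forall k, (K <= k)%nat -> v k = 0) by (intros; apply vv_zero; auto; unfold M in *; lia).
  assert (Hw0 : w 0%nat = 0) by (unfold w, wv; rewrite G0; ring).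
  assert (Hw1 : w 1%nat = 0) by (unfold w, wv; rewrite Hv1; ring).
  assert (HwK : forall k, (K <= k)%nat -> w k = 0) by (intros; unfold w, wv; rewrite HvK by auto; ring).
  pose proof (rellich_finite rho w K Hrel Hw0 Hw1 HwK) as R1.
  unfold w in R1. rewrite (Q_identity v K Hv1 HvK) in R1.
  assert (Hmain : (3 <= M < K)%nat) by (unfold M in *; lia).
  pose proof (Tp_sum M K Hmain HSpos) as R2. fold v in R2.
  pose proof (Fb_sum M K Hmain) as R3. fold H in R3.
  assert (R4 : ssum (Fb M K) K / SS M K ^ 2 <= eps).
  { assert (0 <= INR M) by apply pos_INR.
    assert (HSH : H / 2 <= SS M K) by lra.
    assert (HS2 : H^2 / 4 <= SS M K ^ 2).
    { replace (H^2/4) with ((H/2)^2) by field. apply pow_incr; lra. }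
    assert (Hnum : INR M + 6 + 11 * H <= (INR M + 17) * H) by nra.
    assert (HeH : 4 * (INR M + 17) <= eps * H).
    { apply Rmult_le_reg_r with (/ eps). apply Rinv_0_lt_compat; lra.
      replace (eps * H * / eps) with H by (field; lra). unfold Rdiv in HHb. lra. }
    assert (ssum (Fb M K) K <= eps * SS M K ^ 2).
    { assert (eps * (H^2/4) <= eps * SS M K ^ 2) by (apply Rmult_le_compat_l; lra).
      assert ((INR M + 17) * H <= eps * (H^2/4)).
      { replace (eps * (H^2/4)) with ((eps * H) * H / 4) by field.
        assert (4 * (INR M + 17) * H <= eps * H * H) by (apply Rmult_le_compat_r; lra). lra. }
      lra. }
    apply Rmult_le_reg_r with (SS M K ^ 2). apply pow_lt; auto.
    replace (ssum (Fb M K) K / SS M K ^ 2 * SS M K ^ 2) with (ssum (Fb M K) K) by (field; auto). lra. }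
  assert (R5 : ssum (tseq rho) n <= ssum (fun k => (rho (k+2)%nat - rho2 (k+2)) * wv v (k+2)%nat ^ 2) K).
  { apply ssum_prefix_le. unfold M in *; lia.
    - intros k Hk. unfold tseq, wv, v. rewrite (vv_one M K (k+2)) by (unfold M; lia).
      rewrite <- G_sq. ring.
    - intros k _ _. apply Rmult_le_pos. specialize (Hge (k+2)%nat ltac:(lia)). lra. apply pow2_ge_0. }
  assert (E : ssum (fun k => (rho (k+2)%nat - rho2 (k+2)) * wv v (k+2)%nat ^ 2) K =
              ssum (fun k => rho (k+2)%nat * wv v (k+2)%nat ^ 2) K - ssum (fun k => rho2 (k+2) * wv v (k+2)%nat ^ 2) K).
  { rewrite <- ssum_minus. apply ssum_ext; intros; ring. }
  lra.
Qed.

Theorem theorem3p2 (rho : nat -> R) :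
  rellich_weight rho ->
  (forall n, (2 <= n)%nat -> rho2 n <= rho n) ->
  ex_series (fun k => (INR (k + 2))^3 * (rho (k + 2)%nat - rho2 (k + 2)%nat)) /\
  Series (fun k => (INR (k + 2))^3 * (rho (k + 2)%nat - rho2 (k + 2)%nat))
    <= 8 * sqrt 2 - 3 * sqrt 3.
Proof.
  intros Hrel Hge.
  set (C0 := 8 * sqrt 2 - 3 * sqrt 3).
  assert (Hb : forall n, ssum (tseq rho) n <= C0).
  { intros n. apply Rnot_lt_le. intros Hlt.
    pose proof (partial_eps rho Hrel Hge n ((ssum (tseq rho) n - C0)/2) ltac:(lra)). unfold C0 in *. lra. }
  assert (Hpos : forall k, 0 <= tseq rho k).
  { intros k. unfold tseq. apply Rmult_le_pos. apply pow_le, pos_INR.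
    specialize (Hge (k+2)%nat ltac:(lia)). lra. }
  assert (Hex : ex_finite_lim_seq (sum_n (tseq rho))).
  { apply ex_finite_lim_seq_incr with C0.
    - intros n. rewrite !sum_n_ssum. simpl ssum. specialize (Hpos (S n)). simpl in Hpos |- *. lra.
    - intros n. rewrite sum_n_ssum. apply Hb. }
  destruct Hex as [l Hl].
  assert (Hs : is_series (tseq rho) l) by exact Hl.
  split.
  - exists l. exact Hs.
  - unfold tseq in Hs. rewrite (is_series_unique _ _ Hs).
    pose proof (is_lim_seq_le (sum_n (tseq rho)) (fun _ => C0) l C0) as Q.
    simpl in Q. apply Q; auto. intros n. rewrite sum_n_ssum. apply Hb. apply is_lim_seq_const.
Qed.
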